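(* Let $A$ be a Heffter array $H(n;k)$ in which the entries of each row and each column sum (as integers) to $2nk+1$. Suppose there exist two sets of cells $H_1$ and $H_2$, each forming a Hamilton cycle, which are disjoint from each other and from the filled cells of $A$. Then there exists a Heffter array $H(n;k+4)$ whose rows and columns all sum (as integers) to $2n(k+4)+1$, and whose filled cells are precisely the filled cells of $A$ together with the cells of $H_1$ and $H_2$.
   Context: A Heffter array $H(n;k)$ is an $n\times n$ array in which some cells are filled with nonzero integers and the others are empty, such that: each row and each column contains exactly $k$ filled cells; the entries of every row and of every column sum to $0$ modulo $2nk+1$; and for each integer $1\le x\le nk$, exactly one of $x$ or $-x$ appears in the array, and it appears exactly once. Cells of an $n\times n$ array are identified with edges of $K_{n,n}$ (cell $(i,j)$ ↔ edge $\{a_i,b_j\}$); a set of cells forms a Hamilton cycle if the corresponding edge set is a single cycle of length $2n$. *)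

(* Defs.v *)
From HB Require Import structures.
From mathcomp Require Import all_boot all_order all_algebra.
Set Implicit Arguments. Unset Strict Implicit. Unset Printing Implicit Defensive.
Import Order.TTheory GRing.Theory Num.Theory.

(* An n x n partially filled array of integers is encoded as an integer matrix;
   a cell is "filled" iff its entry is nonzero (entries of a Heffter array are
   nonzero by definition), "empty" iff its entry is 0. *)

Definition filled (n : nat) (A : 'M[int]_n) : {set 'I_n * 'I_n} :=
  [set c | (A c.1 c.2 != 0)%R].

Definition heffter (n k : nat) (A : 'M[int]_n) : Prop :=
  [/\ (forall i : 'I_n, #|[set j : 'I_n | (A i j != 0)%R]| = k),
      (forall j : 'I_n, #|[set i : 'I_n | (A i j != 0)%R]| = k),
      (forall i : 'I_n, ((\sum_(j < n) A i j)%R %% (2 * n * k + 1)%:Z)%Z = 0),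
      (forall j : 'I_n, ((\sum_(i < n) A i j)%R %% (2 * n * k + 1)%:Z)%Z = 0) &
      (forall x : nat, 1 <= x <= n * k ->
         #|[set c : 'I_n * 'I_n | `|A c.1 c.2|%N == x]| = 1)].

Definition sums_equal (n : nat) (A : 'M[int]_n) (s : int) : Prop :=
  (forall i : 'I_n, (\sum_(j < n) A i j)%R = s) /\
  (forall j : 'I_n, (\sum_(i < n) A i j)%R = s).

(* A set of cells forms a Hamilton cycle of K_{n,n} (cell (i,j) <-> edge {a_i,b_j}):
   the edges are those of a cycle a_{r 0} b_{c 0} a_{r 1} b_{c 1} ... a_{r (n-1)} b_{c (n-1)} a_{r 0},
   with r, c bijections (injective maps 'I_n -> 'I_n). *)
Definition hamilton_cycle (n : nat) (C : {set 'I_n * 'I_n}) : Prop :=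
  exists r c : 'I_n -> 'I_n,
    [/\ injective r, injective c &
        C = [set (r i, c i) | i : 'I_n] :|: [set (r (ordS i), c i) | i : 'I_n]].

(* Main.v *)
Require Import Defs.
From HB Require Import structures.
From mathcomp Require Import all_boot all_order all_algebra.
From mathcomp Require Import zify.
Import Order.TTheory GRing.Theory Num.Theory.

Module Aux.
Set Implicit Arguments. Unset Strict Implicit.

Lemma card_sumE (T : finType) (p : pred T) : #|[set x | p x]| = \sum_x (p x : nat).
Proof.
rewrite -sum1_card big_mkcond /=; apply: eq_bigr => x _; rewrite inE; by case: (p x).
Qed.

Lemma sum_lin a y n : \sum_(l < n) ((a + l == y) : nat) = (a <= y < a + n).
Proof.
elim: n => [|n IH]; first by rewrite big_ord0; lia.
rewrite big_ord_recr /= IH; lia.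
Qed.

Lemma sum_rev a y n : \sum_(l < n) ((a + (n.-1 - l) == y) : nat) = (a <= y < a + n).
Proof.
rewrite -sum_lin (reindex_inj rev_ord_inj) /=; apply: eq_bigr => l _.
have lt := ltn_ord l; rewrite /=.
by have -> : n.-1 - (n - l.+1) = l by lia.
Qed.

Lemma ord_predE n (l : 'I_n) : nat_of_ord (ord_pred l) = if nat_of_ord l == 0 then n.-1 else (nat_of_ord l).-1.
Proof.
rewrite /=; case: l => l lt /=.
case: eqP => [->|ne].
  rewrite add0n modn_small //; lia.
have -> : (l + n).-1 = (l.-1) + n by lia.
rewrite modnDr modn_small //; lia.
Qed.

Lemma ordSE n (l : 'I_n) : val (ordS l) = if val l == n.-1 then 0 else (val l).+1.
Proof.
rewrite /=; case: l => l lt /=.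
case: eqP => [->|ne].
  rewrite prednK ?modnn //; lia.
rewrite modn_small //; lia.
Qed.

Lemma sumz (I : finType) (f : I -> nat) : (\sum_i Posz (f i))%R = Posz (\sum_i f i).
Proof. by rewrite (big_morph Posz PoszD (erefl (Posz 0))). Qed.


Definition cset n (r c : 'I_n -> 'I_n) : {set 'I_n * 'I_n} :=
  [set (r i, c i) | i : 'I_n] :|: [set (r (ordS i), c i) | i : 'I_n].

Section Cyc.
Variables (n : nat) (r c : 'I_n -> 'I_n) (r_inj : injective r) (c_inj : injective c).
Hypothesis n_gt1 : 1 < n.
Definition ri := invF r_inj.
Definition ci := invF c_inj.
Definition cyc (P Q : 'I_n -> nat) (i j : 'I_n) : nat :=
  (if c (ri i) == j then P (ri i) else 0) + (if r (ordS (ci j)) == i then Q (ci j) else 0).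

Lemma riK i : r (ri i) = i. Proof. exact: f_invF. Qed.
Lemma rK l : ri (r l) = l. Proof. exact: invF_f. Qed.
Lemma ciK j : c (ci j) = j. Proof. exact: f_invF. Qed.
Lemma cK l : ci (c l) = l. Proof. exact: invF_f. Qed.

Lemma ordS_neq (l : 'I_n) : ordS l != l.
Proof. apply/eqP => /(congr1 val); rewrite ordSE; case: l => l lt /=; case: eqP; lia. Qed.

Lemma nonoverlap i j : c (ri i) == j -> r (ordS (ci j)) == i -> False.
Proof.
move=> /eqP h1 /eqP h2; move: h2; rewrite -h1 cK -{2}(riK i) => /r_inj h.
by move: (ordS_neq (ri i)); rewrite h eqxx.
Qed.

Lemma cyc_mem i j : ((i, j) \in cset r c) = (c (ri i) == j) || (r (ordS (ci j)) == i).
Proof.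
apply/setUP/orP => [[/imsetP [l _ [-> ->]]|/imsetP [l _ [-> ->]]]|[/eqP h|/eqP h]].
- by left; rewrite rK.
- by right; rewrite cK.
- by left; apply/imsetP; exists (ri i) => //; rewrite riK h.
- by right; apply/imsetP; exists (ci j) => //; rewrite ciK h.
Qed.

Lemma cyc_row P Q i : \sum_j cyc P Q i j = P (ri i) + Q (ord_pred (ri i)).
Proof.
rewrite big_split /=; congr (_ + _).
  rewrite (bigD1 (c (ri i))) //= eqxx big1 ?addn0 // => j /negbTE.
  by rewrite eq_sym => ->.
rewrite (reindex_inj c_inj) /= (bigD1 (ord_pred (ri i))) //= cK ord_predK riK eqxx.
rewrite big1 ?addn0 // => l hl; rewrite cK; case: eqP => // h.
by move: hl; rewrite -h rK ordSK eqxx.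
Qed.

Lemma cyc_col P Q j : \sum_i cyc P Q i j = P (ci j) + Q (ci j).
Proof.
rewrite big_split /=; congr (_ + _).
  rewrite (reindex_inj r_inj) /= (bigD1 (ci j)) //= rK ciK eqxx.
  rewrite big1 ?addn0 // => l hl; rewrite rK; case: eqP => // h.
  by move: hl; rewrite -h cK eqxx.
rewrite (bigD1 (r (ordS (ci j)))) //= eqxx big1 ?addn0 // => i /negbTE.
by rewrite eq_sym => ->.
Qed.

Lemma cyc_pos P Q (hP : forall l, 0 < P l) (hQ : forall l, 0 < Q l) i j :
  (0 < cyc P Q i j) = ((i, j) \in cset r c).
Proof.
rewrite cyc_mem /cyc; case: eqP => h1; case: eqP => h2 //=; rewrite ?addn0 ?add0n ?hP ?hQ //.
by rewrite addn_gt0 hP.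
Qed.

Lemma cyc_ind P Q (hP : forall l, 0 < P l) (hQ : forall l, 0 < Q l) i j :
  ((0 < cyc P Q i j) : nat) = cyc (fun _ => 1) (fun _ => 1) i j.
Proof.
rewrite /cyc; case: eqP => h1; case: eqP => h2 //=; rewrite ?addn0 ?add0n ?hP ?hQ //.
by case: (nonoverlap (introT eqP h1) (introT eqP h2)).
Qed.

Lemma cyc_val_pt P Q x i j : 0 < x ->
  ((cyc P Q i j == x) : nat) =
  ((c (ri i) == j) && (P (ri i) == x)) + ((r (ordS (ci j)) == i) && (Q (ci j) == x)).
Proof.
move=> x0; rewrite /cyc; case: (c (ri i) =P j) => h1; case: (r (ordS (ci j)) =P i) => h2 //=; rewrite ?addn0 ?add0n //.
all: try by case: (nonoverlap (introT eqP h1) (introT eqP h2)).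
all: try by case: (_ == x).
by case: x x0.
Qed.

Lemma cyc_val P Q x : 0 < x ->
  \sum_i \sum_j ((cyc P Q i j == x) : nat) =
  \sum_l ((P l == x) : nat) + \sum_l ((Q l == x) : nat).
Proof.
move=> x0.
rewrite (eq_bigr (fun i => \sum_j ((c (ri i) == j) && (P (ri i) == x) : nat)
      + \sum_j ((r (ordS (ci j)) == i) && (Q (ci j) == x) : nat))); last first.
  by move=> i _; rewrite -big_split /=; apply: eq_bigr => j _; rewrite cyc_val_pt.
rewrite big_split /=; congr (_ + _).
  rewrite (reindex_inj r_inj) /=; apply: eq_bigr => l _; rewrite rK.
  rewrite (bigD1 (c l)) //= eqxx big1 ?addn0 // => j /negbTE.
  by rewrite eq_sym => ->.
rewrite exchange_big /= (reindex_inj c_inj) /=; apply: eq_bigr => l _; rewrite cK.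
rewrite (bigD1 (r (ordS l))) //= eqxx big1 ?addn0 // => i /negbTE.
by rewrite eq_sym => ->.
Qed.

End Cyc.


Lemma imset_bij (T U : finType) (f : T -> T) (F : T -> U) : injective f ->
  [set F (f l) | l : T] = [set F l | l : T].
Proof.
move=> fi; apply/setP => x; apply/imsetP/imsetP => [[l _ ->]|[l _ ->]].
  by exists (f l).
by exists (invF fi l) => //; rewrite f_invF.
Qed.

Lemma rot_cycle n (r c : 'I_n -> 'I_n) (rho : 'I_n) : injective r -> injective c ->
  exists r' c', [/\ injective r', injective c', cset r' c' = cset r c &
    forall l : 'I_n, (r' l == rho) = (nat_of_ord l == 0)].
Proof.
move=> ri ci.
have n0 : 0 < n by case: rho => /= k; lia.
pose t := invF ri rho.
pose addm (l : 'I_n) : 'I_n := Ordinal (ltn_pmod (l + t) n0).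
have ai : injective addm.
  move=> l1 l2 /(congr1 val) /= /eqP; rewrite eqn_modDr !modn_small // => /eqP h.
  exact: val_inj.
have aS l : ordS (addm l) = addm (ordS l).
  apply: val_inj => /=; rewrite -(addn1 ((l + t) %% n)) -(addn1 l) modnDml modnDml; congr (_ %% _); lia.
exists (r \o addm), (c \o addm); split.
- by move=> l1 l2 /= /ri /ai.
- by move=> l1 l2 /= /ci /ai.
- rewrite /cset /=.
  rewrite (imset_bij (fun l => (r l, c l)) ai).
  rewrite -(imset_bij (fun l => (r (ordS l), c l)) ai).
  congr (_ :|: _); apply: eq_imset => l /=; by rewrite aS.
- move=> l /=; rewrite -(f_invF ri rho) -/t (inj_eq ri).
  apply/eqP/eqP => [/(congr1 val) /= h|h].
    have : (l + t) %% n == (0 + t) %% n by rewrite h add0n modn_small.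
    by rewrite eqn_modDr mod0n modn_small // => /eqP.
  by apply: val_inj => /=; rewrite h add0n modn_small.
Qed.


Lemma heff_bound n k (A : 'M[int]_n) : heffter k A ->
  forall i j, A i j != 0%R -> (`|A i j|%N <= n * k).
Proof.
case=> hr _ _ _ hv.
pose F := [set c : 'I_n * 'I_n | A c.1 c.2 != 0%R].
pose S := [set c : 'I_n * 'I_n | 0 < `|A c.1 c.2|%N <= n * k].
have cF : #|F| = n * k.
  rewrite card_sumE -(pair_big xpredT xpredT (fun i j => (A i j != 0%R : nat))) /=.
  rewrite (eq_bigr (fun _ => k)); last by move=> i _; rewrite -card_sumE hr.
  by rewrite sum_nat_const card_ord.
have cS : #|S| = n * k.
  rewrite card_sumE.
  rewrite (eq_bigr (fun c => \sum_(l < n * k) ((1 + l == `|A c.1 c.2|%N) : nat))); last first.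
    by move=> c _; rewrite sum_lin.
  rewrite exchange_big /= (eq_bigr (fun _ => 1)); last first.
    move=> l _; transitivity (#|[set c : 'I_n * 'I_n | `|A c.1 c.2|%N == 1 + l]|).
      by rewrite card_sumE; apply: eq_bigr => c _; rewrite eq_sym.
    by apply: hv; have := ltn_ord l; lia.
  by rewrite sum_nat_const card_ord muln1.
have sub : S \subset F.
  apply/subsetP => c; rewrite !inE => /andP [h _]; apply: contraTneq h => ->.
  by [].
have := (subset_leqif_cards sub).2; rewrite cS cF eqxx => /esym /eqP SF.
move=> i j nz; have : (i, j) \in S by rewrite SF inE.
by rewrite inE => /andP [].
Qed.


Lemma main_gt1 (n k : nat) (A : 'M[int]_n) (H1 H2 : {set 'I_n * 'I_n}) : 1 < n ->
  heffter k A ->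
  sums_equal A (2 * n * k + 1)%:Z ->
  hamilton_cycle H1 -> hamilton_cycle H2 ->
  [disjoint H1 & H2] -> [disjoint H1 & filled A] -> [disjoint H2 & filled A] ->
  exists B : 'M[int]_n,
    [/\ heffter (k + 4) B,
        sums_equal B (2 * n * (k + 4) + 1)%:Z &
        filled B = filled A :|: H1 :|: H2].
Proof.
move=> n1 hA [sAr sAc] [r1' [c1' [r1i' c1i' E1']]] [r2' [c2' [r2i' c2i' E2']]] d12 d1A d2A.
have n0 : 0 < n by lia.
pose rho : 'I_n := Ordinal n0.
have [r1 [c1 [r1i c1i E1 hr1]]] := rot_cycle rho r1i' c1i'.
have [r2 [c2 [r2i c2i E2 hr2]]] := rot_cycle rho r2i' c2i'.
have eH1 : H1 = cset r1 c1 by rewrite E1' E1.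
have eH2 : H2 = cset r2 c2 by rewrite E2' E2.
clear E1' E2'; subst H1 H2.
pose m := n * k.
pose P1 (l : 'I_n) := m + 1 + l.
pose Q1 (l : 'I_n) := m + n + 1 + (n.-1 - l).
pose P2 (l : 'I_n) := m + 2 * n + 1 + (n.-1 - l).
pose Q2 (l : 'I_n) := m + 3 * n + 1 + l.
pose N1 := cyc r1i c1i P1 Q1.
pose N2 := cyc r2i c2i P2 Q2.
pose B : 'M[int]_n := (\matrix_(i < n, j < n) (- A i j + (N1 i j)%:Z + (N2 i j)%:Z))%R.
have pN1 i j : (0 < N1 i j) = ((i, j) \in cset r1 c1).
  by apply: cyc_pos => l; rewrite /P1 /Q1; lia.
have pN2 i j : (0 < N2 i j) = ((i, j) \in cset r2 c2).
  by apply: cyc_pos => l; rewrite /P2 /Q2; lia.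
have iN1 i j : ((0 < N1 i j) : nat) = cyc r1i c1i (fun _ => 1) (fun _ => 1) i j.
  by apply: cyc_ind => // l; rewrite /P1 /Q1; lia.
have iN2 i j : ((0 < N2 i j) : nat) = cyc r2i c2i (fun _ => 1) (fun _ => 1) i j.
  by apply: cyc_ind => // l; rewrite /P2 /Q2; lia.
have cases i j : [\/ [/\ A i j != 0%R, N1 i j = 0 & N2 i j = 0],
                    [/\ A i j = 0%R, 0 < N1 i j & N2 i j = 0],
                    [/\ A i j = 0%R, N1 i j = 0 & 0 < N2 i j] |
                    [/\ A i j = 0%R, N1 i j = 0 & N2 i j = 0]].
  have fA : ((i, j) \in filled A) = (A i j != 0%R) by rewrite inE.
  case: (A i j =P 0%R) => hA0; case: (ltnP 0 (N1 i j)) => h1; case: (ltnP 0 (N2 i j)) => h2.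
  - by move: h1 h2; rewrite pN1 pN2 => h1 h2; move: (disjointFr d12 h1); rewrite h2.
  - by apply: Or42; split => //; lia.
  - by apply: Or43; split => //; lia.
  - by apply: Or44; split => //; lia.
  - by move: h1 h2; rewrite pN1 pN2 => h1 h2; move: (disjointFr d12 h1); rewrite h2.
  - have fA' : (i, j) \in filled A by rewrite fA; apply/eqP.
    by move: h1; rewrite pN1 => h1; rewrite (disjointFr d1A h1) in fA'.
  - have fA' : (i, j) \in filled A by rewrite fA; apply/eqP.
    by move: h2; rewrite pN2 => h2; rewrite (disjointFr d2A h2) in fA'.
  - by apply: Or41; split => //; lia.
have Bij i j : B i j = (- A i j + (N1 i j)%:Z + (N2 i j)%:Z)%R by rewrite mxE.
have [hrA hcA _ _ hvA] := hA.
have bnd := heff_bound hA.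
have nzB i j : ((B i j != 0%R) : nat) = (A i j != 0%R) + (0 < N1 i j) + (0 < N2 i j).
  rewrite Bij; case: (cases i j) => [[h a b]|[h a b]|[h a b]|[h a b]].
  - by rewrite a b /= !addr0 oppr_eq0 h !addn0.
  - by rewrite h b a oppr0 add0r addr0 /=; case: (N1 i j) a.
  - by rewrite h a b oppr0 !add0r /=; case: (N2 i j) b.
  - by rewrite h a b oppr0 !add0r.
have absB i j x : 0 < x -> ((`|B i j|%N == x) : nat) =
    (`|A i j|%N == x) + (N1 i j == x) + (N2 i j == x).
  move=> x0; rewrite Bij; case: (cases i j) => [[h a b]|[h a b]|[h a b]|[h a b]].
  - by rewrite a b /= !addr0 abszN; case: x x0 => // x _; rewrite !addn0.
  - by rewrite h b oppr0 add0r addr0 /=; case: x x0 => // x _; rewrite addn0.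
  - by rewrite h a oppr0 !add0r /=; case: x x0 => // x _.
  - by rewrite h a b oppr0 !add0r; case: x x0.
have rsB i : (\sum_j B i j = - (\sum_j A i j) + (\sum_j N1 i j)%:Z + (\sum_j N2 i j)%:Z)%R.
  rewrite -!sumz -sumrN -!big_split /=; apply: eq_bigr => j _; exact: Bij.
have csB j : (\sum_i B i j = - (\sum_i A i j) + (\sum_i N1 i j)%:Z + (\sum_i N2 i j)%:Z)%R.
  rewrite -!sumz -sumrN -!big_split /=; apply: eq_bigr => i _; exact: Bij.
have rowS i : (\sum_j B i j)%R = Posz (2 * n * (k + 4) + 1).
  rewrite rsB sAr /N1 /N2 !cyc_row /P1 /Q1 /P2 /Q2 !ord_predE.
  set l1 := ri r1i i; set l2 := ri r2i i.
  have e1 : (nat_of_ord l1 == 0) = (i == rho) by rewrite -hr1 /l1 riK.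
  have e2 : (nat_of_ord l2 == 0) = (i == rho) by rewrite -hr2 /l2 riK.
  have := ltn_ord l1; have := ltn_ord l2.
  rewrite e1 e2 /m -!mulnA !mulnDr; move: (n * k) => mm; case: (i == rho) e1 e2; lia.
have colS j : (\sum_i B i j)%R = Posz (2 * n * (k + 4) + 1).
  rewrite csB sAc /N1 /N2 !cyc_col /P1 /Q1 /P2 /Q2.
  have := ltn_ord (ci c1i j); have := ltn_ord (ci c2i j).
  rewrite /m -!mulnA !mulnDr; move: (n * k) => mm; lia.
exists B; split.
- split.
  + move=> i; rewrite card_sumE (eq_bigr _ (fun j _ => nzB i j)) !big_split /=.
    rewrite -card_sumE hrA (eq_bigr _ (fun j _ => iN1 i j)) (eq_bigr _ (fun j _ => iN2 i j)).
    rewrite (cyc_row r1i c1i) (cyc_row r2i c2i); lia.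
  + move=> j; rewrite card_sumE (eq_bigr _ (fun i _ => nzB i j)) !big_split /=.
    rewrite -card_sumE hcA (eq_bigr _ (fun i _ => iN1 i j)) (eq_bigr _ (fun i _ => iN2 i j)).
    rewrite (cyc_col r1i c1i) (cyc_col r2i c2i); lia.
  + by move=> i; rewrite rowS modzz.
  + by move=> j; rewrite colS modzz.
  + move=> x /andP [x1 x2].
    rewrite card_sumE -(pair_big xpredT xpredT (fun i j => (`|B i j|%N == x : nat))) /=.
    rewrite (eq_bigr (fun i => \sum_j ((`|A i j|%N == x) + (N1 i j == x) + (N2 i j == x))));
      last by move=> i _; apply: eq_bigr => j _; rewrite absB.
    rewrite (eq_bigr (fun i => \sum_j (`|A i j|%N == x : nat) + \sum_j (N1 i j == x : nat)
                 + \sum_j (N2 i j == x : nat))); last by move=> i _; rewrite !big_split.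
    rewrite !big_split /= /N1 /N2 !cyc_val //.
    rewrite /P1 /Q1 /P2 /Q2.
    rewrite sum_lin sum_lin sum_rev sum_rev.
    have -> : \sum_(i < n) \sum_(j < n) ((`|A i j|%N == x) : nat) = (x <= m).
      case: (leqP x m) => hx.
        rewrite (pair_big xpredT xpredT (fun i j => ((`|A i j|%N == x) : nat))) /=.
        by rewrite -card_sumE hvA // x1.
      rewrite big1 // => i _; rewrite big1 // => j _.
      case: (A i j =P 0%R) => [->|/eqP nz]; first by case: x x1 {x2 hx}.
      have := bnd i j nz; rewrite -/m; case: eqP => // ->; lia.
    move: x2; rewrite mulnDr -/m; lia.
- by split.
- apply/setP => [[i j]]; rewrite in_setU in_setU -pN1 -pN2 !inE /= Bij.
  case: (cases i j) => [[h a b]|[h a b]|[h a b]|[h a b]].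
  + by rewrite a b /= !addr0 oppr_eq0 h orbF.
  + by rewrite h b a oppr0 add0r addr0 /=; case: (N1 i j) a.
  + by rewrite h a b oppr0 !add0r /=; case: (N2 i j) b.
  + by rewrite h a b oppr0 !add0r eqxx.
Qed.

End Aux.
Import Aux.

Theorem theorem2p2 (n k : nat) (A : 'M[int]_n) (H1 H2 : {set 'I_n * 'I_n}) :
  heffter k A ->
  sums_equal A (2 * n * k + 1)%:Z ->
  hamilton_cycle H1 -> hamilton_cycle H2 ->
  [disjoint H1 & H2] -> [disjoint H1 & filled A] -> [disjoint H2 & filled A] ->
  exists B : 'M[int]_n,
    [/\ heffter (k + 4) B,
        sums_equal B (2 * n * (k + 4) + 1)%:Z &
        filled B = filled A :|: H1 :|: H2].
Proof.
move=> hA sA h1 h2 d12 d1A d2A.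
case: (ltnP 1 n) => hn; first exact: main_gt1.
move: hn A H1 H2 hA sA h1 h2 d12 d1A d2A.
case: n => [|[|//]] _ A H1 H2 hA sA h1 h2 d12 d1A d2A.
- exists A; split.
  + split; try by case.
  + by split; case; case.
  + by apply/setP => [[[]]].
- exfalso.
  case: h1 => r1 [c1 [_ _ E1]]; case: h2 => r2 [c2 [_ _ E2]].
  have m1 : (r1 ord0, c1 ord0) \in H1.
    by rewrite E1 in_setU; apply/orP; left; apply/imsetP; exists ord0.
  have m2 : (r1 ord0, c1 ord0) \in H2.
    have e (a b : 'I_1) : a = b by rewrite (ord1 a) (ord1 b).
    rewrite (e (r1 ord0) (r2 ord0)) (e (c1 ord0) (c2 ord0)).
    by rewrite E2 in_setU; apply/orP; left; apply/imsetP; exists ord0.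
  by rewrite (disjointFr d12 m1) in m2.
Qed.
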